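(* (i) Each geodesic triangle $\Delta_X$ (with vertices three distinct cusps in $\mathbb{P}^1(K)$) lies either on a holomorphic curve or on an anti-holomorphic curve in $\mathbb{H}^2$. (ii) Each geodesic forming a side of a geodesic triangle $\Delta_X$ belongs both to a holomorphic curve and to an anti-holomorphic curve in $\mathbb{H}^2$.
   Context: $K=\mathbb{Q}(\sqrt d)$ is a real quadratic field with two real embeddings $x\mapsto x_1,x_2$. For $\gamma=\begin{pmatrix}a&b\\c&d\end{pmatrix}\in GL_2(K)$ let $\gamma_1,\gamma_2$ be its two real embeddings. $GL_2(K)$ acts on $\mathbb{H}^2=\mathbb{H}\times\mathbb{H}$ (and on the cusps $\mathbb{P}^1(K)$) by: if $\det\gamma_1>0,\det\gamma_2>0$, $\gamma z=(\gamma_1z_1,\gamma_2z_2)$ (Möbius transformations); if $\det\gamma_1<0,\det\gamma_2<0$, $\gamma z=\big(-\frac{a_1\bar z_1+b_1}{c_1\bar z_1+d_1},-\frac{a_2\bar z_2+b_2}{c_2\bar z_2+d_2}\big)$; if $\det\gamma_1>0,\det\gamma_2<0$, $\gamma z=\big(\frac{a_1z_1+b_1}{c_1z_1+d_1},-\frac{a_2\bar z_2+b_2}{c_2\bar z_2+d_2}\big)$ (and symmetrically in the other mixed case). Let $\Delta$ be the image of the diagonal map $\mathbb{H}\to\mathbb{H}^2$, $x\mapsto(x,x)$; its boundary contains $0,1,\infty$. Given three distinct cusps $z_0,z_1,z_\infty$, let $\gamma\in PGL_2(K)$ be the unique element sending them to $0,1,\infty$, let $X=\gamma^*\Delta=\gamma^{-1}(\Delta)$,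 and let the geodesic triangle $\Delta_X$ be the preimage under $\gamma$ of the geodesic triangle in $\Delta\cong\mathbb{H}$ with vertices $0,1,\infty$. An anti-holomorphic curve in $\mathbb{H}^2$ is a curve that is holomorphic after replacing the complex structure of one of the two factors $\mathbb{H}$ by its conjugate (e.g. $z_1=-\bar z_2$). *)

(* Defs.v *)
From Stdlib Require Import Reals QArith Qreals.
From Coquelicot Require Import Coquelicot.

(* d : Z with 0 < d and d not a perfect square.  An element (a, b) : Q * Q
   represents a + b sqrt(d).  Equality is componentwise Qeq. *)
Definition Kel : Type := (Q * Q)%type.
Definition Kzero : Kel := (0%Q, 0%Q).
Definition Kone : Kel := (1%Q, 0%Q).
Definition Kadd (x y : Kel) : Kel := (Qplus (fst x) (fst y), Qplus (snd x) (snd y)).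
Definition Kopp (x : Kel) : Kel := (Qopp (fst x), Qopp (snd x)).
Definition Ksub (x y : Kel) : Kel := Kadd x (Kopp y).
Definition Kmul (d : Z) (x y : Kel) : Kel :=
  ((fst x * fst y + inject_Z d * (snd x * snd y))%Q,
   (fst x * snd y + snd x * fst y)%Q).
Definition Keq (x y : Kel) : Prop := Qeq (fst x) (fst y) /\ Qeq (snd x) (snd y).

Definition emb1 (d : Z) (x : Kel) : R := (Q2R (fst x) + Q2R (snd x) * sqrt (IZR d))%R.
Definition emb2 (d : Z) (x : Kel) : R := (Q2R (fst x) - Q2R (snd x) * sqrt (IZR d))%R.

Record mat2 : Type := Mat2 { ma : Kel; mb : Kel; mc : Kel; md : Kel }.
Definition Kdet (d : Z) (g : mat2) : Kel :=
  Ksub (Kmul d (ma g) (md g)) (Kmul d (mb g) (mc g)).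

(* a cusp (x : y) in P^1(K), represented by a nonzero vector (x, y) *)
Definition cusp : Type := (Kel * Kel)%type.
Definition is_cusp (c : cusp) : Prop := ~ (Keq (fst c) Kzero /\ Keq (snd c) Kzero).
Definition cusp_distinct (d : Z) (c c' : cusp) : Prop :=
  ~ Keq (Ksub (Kmul d (fst c) (snd c')) (Kmul d (snd c) (fst c'))) Kzero.
Definition cusp_act (d : Z) (g : mat2) (c : cusp) : cusp :=
  (Kadd (Kmul d (ma g) (fst c)) (Kmul d (mb g) (snd c)),
   Kadd (Kmul d (mc g) (fst c)) (Kmul d (md g) (snd c))).
Definition cusp_eq (d : Z) (c c' : cusp) : Prop := ~ cusp_distinct d c c'.
Definition cusp0 : cusp := (Kzero, Kone).
Definition cusp1 : cusp := (Kone, Kone).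
Definition cuspinf : cusp := (Kone, Kzero).

Definition Hpl (z : C) : Prop := (0 < Im z)%R.
Local Open Scope C_scope.

Definition real_act (a b c e : R) (z : C) : C :=
  if Rlt_dec 0 (a * e - b * c)%R
  then (RtoC a * z + RtoC b) / (RtoC c * z + RtoC e)
  else (RtoC a * Cconj z + RtoC b) / (RtoC c * Cconj z + RtoC e).

Definition act1 (d : Z) (g : mat2) (z : C) : C :=
  real_act (emb1 d (ma g)) (emb1 d (mb g)) (emb1 d (mc g)) (emb1 d (md g)) z.
Definition act2 (d : Z) (g : mat2) (z : C) : C :=
  real_act (emb2 d (ma g)) (emb2 d (mb g)) (emb2 d (mc g)) (emb2 d (md g)) z.

Definition tri01inf (x : C) : Prop :=
  Hpl x /\ (0 <= Re x <= 1)%R /\ (1/2 <= Cmod (x - RtoC (1/2)))%R.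
Definition side_0inf (x : C) : Prop := Hpl x /\ Re x = 0%R.
Definition side_1inf (x : C) : Prop := Hpl x /\ Re x = 1%R.
Definition side_01 (x : C) : Prop := Hpl x /\ Cmod (x - RtoC (1/2)) = (1/2)%R.

(* preimage under g of the image in the diagonal Delta of a subset S of H *)
Definition pull_diag (d : Z) (g : mat2) (S : C -> Prop) (z1 z2 : C) : Prop :=
  Hpl z1 /\ Hpl z2 /\ act1 d g z1 = act2 d g z2 /\ S (act1 d g z1).

Definition C_holo_at (f : C -> C) (z : C) : Prop :=
  @ex_derive C_AbsRing C_NormedModule f z.

(* holomorphic on H^2: jointly continuous and holomorphic in each variable
   (Osgood) *)
Definition holo_H2 (F : C -> C -> C) : Prop :=
  forall z1 z2 : C, Hpl z1 -> Hpl z2 ->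
    filterlim (fun p : C * C => F (fst p) (snd p)) (locally (z1, z2))
      (locally (F z1 z2)) /\
    C_holo_at (fun w => F w z2) z1 /\ C_holo_at (fun w => F z1 w) z2.

Definition on_holo_curve (S : C -> C -> Prop) : Prop :=
  exists F : C -> C -> C, holo_H2 F /\
    (exists w1 w2, Hpl w1 /\ Hpl w2 /\ F w1 w2 <> 0) /\
    (forall z1 z2, S z1 z2 -> Hpl z1 /\ Hpl z2 /\ F z1 z2 = 0).

(* S lies on an anti-holomorphic curve: on a holomorphic curve after
   replacing the complex structure of one factor by its conjugate, i.e.
   after composing that factor with the antiholomorphic bijection
   z |-> - conj z of H *)
Definition on_antiholo_curve (S : C -> C -> Prop) : Prop :=
  on_holo_curve (fun z1 z2 => S z1 (- Cconj z2)) \/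
  on_holo_curve (fun z1 z2 => S (- Cconj z1) z2).

(* Main.v *)
Require Import Defs.
From Stdlib Require Import Reals QArith Qreals Classical Lra.
From Coquelicot Require Import Coquelicot.
Local Open Scope C_scope.
Definition mob (a b c e : R) (w : C) : C := (RtoC a * w + RtoC b) / (RtoC c * w + RtoC e).

Lemma Im_mob a b c e p q :
  Im (mob a b c e (p, q)) = ((a*e - b*c) * q * / ((c*p+e)*(c*p+e) + (c*q)*(c*q)))%R.
Proof.
unfold mob, Cdiv, Cmult, Cplus, Cinv, RtoC, Im; simpl.
replace (c * p - 0 * q + e)%R with (c*p+e)%R by ring.
replace (c * q + 0 * p + 0)%R with (c*q)%R by ring.
replace ((c * p + e) * ((c * p + e) * 1) + c * q * (c * q * 1))%R
  with ((c*p+e)*(c*p+e) + (c*q)*(c*q))%R by ring.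
unfold Rdiv. ring.
Qed.

Lemma cdiv0 (u : C) : u / 0 = 0.
Proof.
unfold Cdiv, Cinv, Cmult. destruct u. simpl. 
replace (0 * (0 * 1) + 0 * (0 * 1))%R with 0%R by ring.
apply injective_projections; simpl; unfold Rdiv; rewrite ?Ropp_0, !Rmult_0_l; ring.
Qed.

Definition bil (A B Cc D : C) (z1 z2 : C) : C := A * z1 * z2 + B * z1 + Cc * z2 + D.
Definition bilR (A B Cc D : R) := bil (RtoC A) (RtoC B) (RtoC Cc) (RtoC D).

Lemma mob_det0 a b c e w : (a*e - b*c = 0)%R -> ~ Hpl (mob a b c e w).
Proof.
intros H. destruct w as [p q]. unfold Hpl. rewrite Im_mob, H. lra.
Qed.

Lemma mob_den a b c e w : Hpl (mob a b c e w) -> RtoC c * w + RtoC e <> 0.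
Proof.
intros H H0. unfold mob in H. rewrite H0, cdiv0 in H. unfold Hpl, Im in H. simpl in H. lra.
Qed.

Lemma bil_expand a1 b1 c1 e1 a2 b2 c2 e2 w1 w2 :
  bilR (a1*c2 - a2*c1) (a1*e2 - b2*c1) (b1*c2 - a2*e1) (b1*e2 - b2*e1) w1 w2 =
  (RtoC a1 * w1 + RtoC b1) * (RtoC c2 * w2 + RtoC e2) - (RtoC a2 * w2 + RtoC b2) * (RtoC c1 * w1 + RtoC e1).
Proof.
destruct w1, w2. unfold bilR, bil, RtoC, Cmult, Cplus, Cminus, Copp.
apply injective_projections; simpl; ring.
Qed.

Lemma core a1 b1 c1 e1 a2 b2 c2 e2 w1 w2 x :
  Hpl x -> x = mob a1 b1 c1 e1 w1 -> x = mob a2 b2 c2 e2 w2 ->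
  bilR (a1*c2 - a2*c1) (a1*e2 - b2*c1) (b1*c2 - a2*e1) (b1*e2 - b2*e1) w1 w2 = 0.
Proof.
intros Hx E1 E2.
assert (V1 := mob_den a1 b1 c1 e1 w1 ltac:(rewrite <- E1; exact Hx)).
assert (V2 := mob_den a2 b2 c2 e2 w2 ltac:(rewrite <- E2; exact Hx)).
rewrite bil_expand.
assert (U1 : RtoC a1 * w1 + RtoC b1 = x * (RtoC c1 * w1 + RtoC e1)).
{ rewrite E1. unfold mob. field. exact V1. }
assert (U2 : RtoC a2 * w2 + RtoC b2 = x * (RtoC c2 * w2 + RtoC e2)).
{ rewrite E2. unfold mob. field. exact V2. }
rewrite U1, U2. ring.
Qed.

Lemma conj_R (r : R) : Cconj (RtoC r) = RtoC r.
Proof. unfold Cconj, RtoC; simpl. apply injective_projections; simpl; ring. Qed.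

Lemma conj_mob a b c e w : RtoC c * w + RtoC e <> 0 ->
  Cconj (mob a b c e w) = mob a b c e (Cconj w).
Proof.
intros H. unfold mob. rewrite Cdiv_conj by exact H.
rewrite !Cplus_conj, !Cmult_conj, !conj_R. reflexivity.
Qed.

Lemma mob_den' a b c e w : mob a b c e w <> 0 -> RtoC c * w + RtoC e <> 0.
Proof. intros H H0. apply H. unfold mob. rewrite H0. apply cdiv0. Qed.

Lemma Hpl_nz x : Hpl x -> x <> 0.
Proof. intros H H0. rewrite H0 in H. unfold Hpl, Im in H; simpl in H. lra. Qed.

Lemma den_conj c e w : RtoC c * w + RtoC e <> 0 -> RtoC c * Cconj w + RtoC e <> 0.
Proof.
intros V K. apply V. rewrite <- (Cconj_conj (RtoC c * w + RtoC e)).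
rewrite Cplus_conj, Cmult_conj, !conj_R, K.
unfold Cconj; simpl. apply injective_projections; simpl; ring.
Qed.

Lemma refl0 a b c e w x : Hpl x -> x = mob a b c e w -> Re x = 0%R ->
  x = mob (-a) (-b) c e (Cconj w).
Proof.
intros Hx E Hr.
assert (V := mob_den a b c e w ltac:(rewrite <- E; exact Hx)).
assert (Hx' : x = - Cconj x).
{ destruct x as [p q]. unfold Re in Hr; simpl in Hr. unfold Cconj, Copp. simpl.
  apply injective_projections; simpl; lra. }
rewrite Hx', E, conj_mob by exact V. unfold mob. rewrite !RtoC_opp. field.
apply den_conj; exact V.
Qed.

Lemma refl1 a b c e w x : Hpl x -> x = mob a b c e w -> Re x = 1%R ->
  x = mob (2*c - a) (2*e - b) c e (Cconj w).
Proof.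
intros Hx E Hr.
assert (V := mob_den a b c e w ltac:(rewrite <- E; exact Hx)).
assert (Hx' : x = RtoC 2 - Cconj x).
{ destruct x as [p q]. unfold Re in Hr; simpl in Hr. unfold Cconj, Cminus, Cplus, Copp, RtoC. simpl.
  apply injective_projections; simpl; lra. }
rewrite Hx', E, conj_mob by exact V. unfold mob. rewrite !RtoC_minus, !RtoC_mult. field.
apply den_conj; exact V.
Qed.

Lemma refl01 a b c e w x : Hpl x -> x = mob a b c e w -> Cmod (x - RtoC (1/2)) = (1/2)%R ->
  x = mob a b (2*a - c) (2*b - e) (Cconj w).
Proof.
intros Hx E Hr.
assert (V := mob_den a b c e w ltac:(rewrite <- E; exact Hx)).
set (X := Cconj x).
assert (HX : x * (RtoC 2 * X - 1) = X).
{ unfold X. destruct x as [p q]. unfold Cmod in Hr. simpl in Hr.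
  assert (Hr2 := f_equal (fun t => t*t)%R Hr). simpl in Hr2.
  rewrite sqrt_sqrt in Hr2 by (rewrite !Rmult_1_r; apply Rplus_le_le_0_compat; apply Rle_0_sqr).
  unfold Cconj, Cminus, Cplus, Copp, Cmult, RtoC. simpl.
  apply injective_projections; simpl; nra. }
assert (HX2 : RtoC 2 * X - 1 <> 0).
{ intro K. apply (Hpl_nz x Hx). rewrite K, Cmult_0_r in HX.
  unfold X in HX. rewrite <- (Cconj_conj x). rewrite <- HX.
  unfold Cconj; simpl. apply injective_projections; simpl; ring. }
assert (EX : X = mob a b c e (Cconj w)) by (unfold X; rewrite E; apply conj_mob; exact V).
assert (V' := den_conj c e w V).
unfold mob in EX |- *.
set (u := RtoC a * Cconj w + RtoC b) in *.
set (v := RtoC c * Cconj w + RtoC e) in *.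
assert (U : u = X * v) by (rewrite EX; field; exact V').
assert (D : RtoC (2*a - c) * Cconj w + RtoC (2*b - e) = (RtoC 2 * X - 1) * v).
{ rewrite !RtoC_minus, !RtoC_mult. 
  transitivity (RtoC 2 * u - v). unfold u, v. ring. rewrite U. ring. }
rewrite D, U. transitivity (x * (RtoC 2 * X - 1) * v / ((RtoC 2 * X - 1) * v)).
field. split; assumption. rewrite HX. reflexivity.
Qed.

Lemma cont_mult (f g : C * C -> C) (p : C * C) :
  filterlim f (locally p) (locally (f p)) ->
  filterlim g (locally p) (locally (g p)) ->
  filterlim (fun q => f q * g q) (locally p) (locally (f p * g p)).
Proof.
intros Hf Hg.
assert (Hf' : filterlim f (locally p) (@locally (AbsRing_UniformSpace C_AbsRing) (f p))).
{ intros P HP. apply Hf. apply locally_C. exact HP. }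
apply (filterlim_comp_2 (G := @locally (AbsRing_UniformSpace C_AbsRing) (f p)) (H := locally (g p)) f g (fun x y => x * y) Hf' Hg).
exact (@filterlim_scal C_AbsRing C_NormedModule (f p) (g p)).
Qed.

Lemma cont_plus (f g : C * C -> C) (p : C * C) :
  filterlim f (locally p) (locally (f p)) ->
  filterlim g (locally p) (locally (g p)) ->
  filterlim (fun q => f q + g q) (locally p) (locally (f p + g p)).
Proof.
intros Hf Hg.
apply (filterlim_comp_2 (G := locally (f p)) (H := locally (g p)) f g (fun x y => x + y) Hf Hg).
exact (@filterlim_plus C_AbsRing C_NormedModule (f p) (g p)).
Qed.

Lemma holo_bil A B Cc D : holo_H2 (bil A B Cc D).
Proof.
intros z1 z2 _ _. unfold bil. split; [|split].
- simpl.
  apply (cont_plus (fun q => A * fst q * snd q + B * fst q + Cc * snd q) (fun _ => D)).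
  apply (cont_plus (fun q => A * fst q * snd q + B * fst q) (fun q => Cc * snd q)).
  apply (cont_plus (fun q => A * fst q * snd q) (fun q => B * fst q)).
  apply (cont_mult (fun q => A * fst q) (fun q => snd q)).
  apply (cont_mult (fun q => A) (fun q => fst q)).
  apply filterlim_const.
  apply continuous_fst. apply continuous_snd.
  apply (cont_mult (fun q => B) (fun q => fst q)).
  apply filterlim_const. apply continuous_fst.
  apply (cont_mult (fun q => Cc) (fun q => snd q)).
  apply filterlim_const. apply continuous_snd.
  apply filterlim_const.
- unfold C_holo_at.
  apply (ex_derive_ext (fun w => @plus C_NormedModule (@scal C_AbsRing C_NormedModule w (A * z2 + B)) (Cc * z2 + D))).
  + intros t. simpl. change (t * (A*z2+B) + (Cc*z2+D) = A * t * z2 + B * t + Cc * z2 + D). ring.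
  + apply ex_derive_plus. apply (ex_derive_scal_l (fun w => w)). apply ex_derive_id. apply ex_derive_const.
- unfold C_holo_at.
  apply (ex_derive_ext (fun w => @plus C_NormedModule (@scal C_AbsRing C_NormedModule w (A * z1 + Cc)) (B * z1 + D))).
  + intros t. simpl. change (t * (A*z1+Cc) + (B*z1+D) = A * z1 * t + B * z1 + Cc * t + D). ring.
  + apply ex_derive_plus. apply (ex_derive_scal_l (fun w => w)). apply ex_derive_id. apply ex_derive_const.
Qed.

Lemma bil_nz A B Cc D : B * Cc - A * D <> 0 ->
  exists w1 w2, Hpl w1 /\ Hpl w2 /\ bil A B Cc D w1 w2 <> 0.
Proof.
intros H.
set (s := (0%R, 1%R) : C). set (t := (0%R, 2%R) : C).
assert (Hs : Hpl s) by (unfold Hpl, s, Im; simpl; lra).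
assert (Ht : Hpl t) by (unfold Hpl, t, Im; simpl; lra).
destruct (classic (bil A B Cc D s s = 0)) as [E1|E1]; [|now exists s, s].
destruct (classic (bil A B Cc D s t = 0)) as [E2|E2]; [|now exists s, t].
destruct (classic (bil A B Cc D t s = 0)) as [E3|E3]; [|now exists t, s].
destruct (classic (bil A B Cc D t t = 0)) as [E4|E4]; [|now exists t, t].
exfalso. apply H.
assert (Hk : t - s <> 0).
{ unfold t, s. intro K. injection K. lra. }
assert (KA : (t-s)*(t-s)*A = bil A B Cc D t t - bil A B Cc D t s - bil A B Cc D s t + bil A B Cc D s s) by (unfold bil; ring).
assert (KB : (t-s)*(t-s)*B = t*(bil A B Cc D t s - bil A B Cc D s s) - s*(bil A B Cc D t t - bil A B Cc D s t)) by (unfold bil; ring).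
assert (KC : (t-s)*(t-s)*Cc = t*(bil A B Cc D s t - bil A B Cc D s s) - s*(bil A B Cc D t t - bil A B Cc D t s)) by (unfold bil; ring).
assert (KD : (t-s)*(t-s)*D = t*t*bil A B Cc D s s - t*s*bil A B Cc D s t - s*t*bil A B Cc D t s + s*s*bil A B Cc D t t) by (unfold bil; ring).
rewrite E1, E2, E3, E4 in KA, KB, KC, KD.
assert (K : (t-s)*(t-s)*(t-s)*(t-s)*(B*Cc - A*D) = ((t-s)*(t-s)*B)*((t-s)*(t-s)*Cc) - ((t-s)*(t-s)*A)*((t-s)*(t-s)*D)) by ring.
rewrite KA, KB, KC, KD in K.
replace (B*Cc - A*D) with (/((t-s)*(t-s)*(t-s)*(t-s)) * ((t-s)*(t-s)*(t-s)*(t-s)*(B*Cc - A*D))).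
rewrite K. ring.
field. repeat split; exact Hk.
Qed.

Lemma RtoC_nz (r : R) : r <> 0%R -> RtoC r <> 0.
Proof. intros H K. apply H. apply (f_equal fst) in K. simpl in K. exact K. Qed.

Lemma holo_of (A B Cc D : R) (Q : C -> C -> Prop) : (B*Cc - A*D <> 0)%R ->
  (forall z1 z2, Q z1 z2 -> Hpl z1 /\ Hpl z2 /\ bilR A B Cc D z1 z2 = 0) -> on_holo_curve Q.
Proof.
intros H HQ. exists (bilR A B Cc D). split; [apply holo_bil|split; [|exact HQ]].
apply bil_nz. rewrite <- !RtoC_mult, <- RtoC_minus. apply RtoC_nz. exact H.
Qed.

Lemma bil_conj A B Cc D z1 z2 : bilR A B Cc D (Cconj z1) (Cconj z2) = Cconj (bilR A B Cc D z1 z2).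
Proof.
destruct z1, z2. unfold bilR, bil, RtoC, Cconj, Cmult, Cplus. simpl.
apply injective_projections; simpl; ring.
Qed.

Lemma conj_eq0 X : Cconj X = 0 -> X = 0.
Proof. intros H. rewrite <- (Cconj_conj X), H. unfold Cconj; simpl.
apply injective_projections; simpl; ring. Qed.

Lemma bil_flip2 A B Cc D z1 z2 : bilR A B Cc D z1 (- z2) = bilR (-A) B (-Cc) D z1 z2.
Proof. unfold bilR, bil. rewrite !RtoC_opp. ring. Qed.

Lemma bil_flip1 A B Cc D z1 z2 : bilR A B Cc D (- z1) z2 = bilR (-A) (-B) Cc D z1 z2.
Proof. unfold bilR, bil. rewrite !RtoC_opp. ring. Qed.

Lemma Hpl_flip z : Hpl (- Cconj z) -> Hpl z.
Proof. destruct z. unfold Hpl, Im, Cconj, Copp; simpl. lra. Qed.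

Lemma conj_flip z : Cconj (- Cconj z) = - z.
Proof. rewrite Copp_conj, Cconj_conj. reflexivity. Qed.

Definition sel (s : bool) (z : C) : C := if s then z else Cconj z.

Lemma conj_sel s z : Cconj (sel s z) = sel (negb s) z.
Proof. destruct s; simpl; [reflexivity| apply Cconj_conj]. Qed.

Definition Rel a1 b1 c1 e1 s1 a2 b2 c2 e2 s2 z1 z2 : Prop :=
  exists x, Hpl x /\ x = mob a1 b1 c1 e1 (sel s1 z1) /\ x = mob a2 b2 c2 e2 (sel s2 z2).

Lemma master a1 b1 c1 e1 s1 a2 b2 c2 e2 s2 (Q : C -> C -> Prop) :
  (a1*e1 - b1*c1 <> 0)%R -> (a2*e2 - b2*c2 <> 0)%R ->
  (forall z1 z2, Q z1 z2 -> Hpl z1 /\ Hpl z2 /\ Rel a1 b1 c1 e1 s1 a2 b2 c2 e2 s2 z1 z2) ->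
  (s1 = s2 -> on_holo_curve Q) /\ (s1 <> s2 -> on_antiholo_curve Q).
Proof.
intros D1 D2 HQ.
assert (ND : ((a1*e2 - b2*c1)*(b1*c2 - a2*e1) - (a1*c2 - a2*c1)*(b1*e2 - b2*e1) <> 0)%R).
{ replace ((a1*e2 - b2*c1)*(b1*c2 - a2*e1) - (a1*c2 - a2*c1)*(b1*e2 - b2*e1))%R
    with (-((a1*e1 - b1*c1)*(a2*e2 - b2*c2)))%R by ring.
  apply Ropp_neq_0_compat. apply Rmult_integral_contrapositive; split; assumption. }
split.
- intros <-. destruct s1.
  + apply (holo_of _ _ _ _ Q ND). intros z1 z2 Hq. destruct (HQ z1 z2 Hq) as (H1 & H2 & x & Hx & E1 & E2).
    repeat split; try assumption. exact (core _ _ _ _ _ _ _ _ _ _ x Hx E1 E2).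
  + apply (holo_of _ _ _ _ Q ND). intros z1 z2 Hq. destruct (HQ z1 z2 Hq) as (H1 & H2 & x & Hx & E1 & E2).
    repeat split; try assumption. apply conj_eq0. rewrite <- bil_conj.
    exact (core _ _ _ _ _ _ _ _ _ _ x Hx E1 E2).
- intros Hs. destruct s1, s2; try (exfalso; apply Hs; reflexivity).
  + left. apply (holo_of (-(a1*c2 - a2*c1)) (a1*e2 - b2*c1) (-(b1*c2 - a2*e1)) (b1*e2 - b2*e1)).
    { intro K; apply ND. lra. }
    intros z1 z2 Hq. destruct (HQ _ _ Hq) as (H1 & H2 & x & Hx & E1 & E2).
    repeat split; try assumption. apply Hpl_flip; exact H2.
    rewrite <- bil_flip2. simpl in E2. rewrite conj_flip in E2.
    exact (core _ _ _ _ _ _ _ _ _ _ x Hx E1 E2).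
  + right. apply (holo_of (-(a1*c2 - a2*c1)) (-(a1*e2 - b2*c1)) (b1*c2 - a2*e1) (b1*e2 - b2*e1)).
    { intro K; apply ND. lra. }
    intros z1 z2 Hq. destruct (HQ _ _ Hq) as (H1 & H2 & x & Hx & E1 & E2).
    repeat split; try assumption. apply Hpl_flip; exact H1.
    rewrite <- bil_flip1. simpl in E1. rewrite conj_flip in E1.
    exact (core _ _ _ _ _ _ _ _ _ _ x Hx E1 E2).
Qed.

Lemma real_act_sel a b c e z : real_act a b c e z =
  mob a b c e (sel (if Rlt_dec 0 (a*e - b*c) then true else false) z).
Proof. unfold real_act. destruct (Rlt_dec 0 (a*e - b*c)); reflexivity. Qed.

Lemma empty_both (Q : C -> C -> Prop) : (forall z1 z2, ~ Q z1 z2) ->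
  on_holo_curve Q /\ on_antiholo_curve Q.
Proof.
intros H. split.
- apply (holo_of 0 1 1 0). { intro K. ring_simplify in K. lra. }
  intros z1 z2 q. exfalso. exact (H _ _ q).
- left. apply (holo_of 0 1 1 0). { intro K. ring_simplify in K. lra. }
  intros z1 z2 q. exfalso. exact (H _ _ q).
Qed.

Lemma side_both a1 b1 c1 e1 s1 a2 b2 c2 e2 s2 a3 b3 c3 e3 (Q : C -> C -> Prop) :
  (a1*e1 - b1*c1 <> 0)%R -> (a2*e2 - b2*c2 <> 0)%R -> (a3*e3 - b3*c3 <> 0)%R ->
  (forall z1 z2, Q z1 z2 -> Hpl z1 /\ Hpl z2 /\ Rel a1 b1 c1 e1 s1 a2 b2 c2 e2 s2 z1 z2) ->
  (forall z1 z2, Q z1 z2 -> Hpl z1 /\ Hpl z2 /\ Rel a1 b1 c1 e1 s1 a3 b3 c3 e3 (negb s2) z1 z2) ->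
  on_holo_curve Q /\ on_antiholo_curve Q.
Proof.
intros D1 D2 D3 H2 H3.
destruct (master _ _ _ _ s1 _ _ _ _ s2 Q D1 D2 H2) as [M1 M2].
destruct (master _ _ _ _ s1 _ _ _ _ (negb s2) Q D1 D3 H3) as [M3 M4].
destruct s1, s2; simpl in *; split;
  first [apply M1; reflexivity | apply M2; discriminate | apply M3; reflexivity | apply M4; discriminate].
Qed.

Theorem lemma3p1 (d : Z) (hd : (0 < d)%Z) (hsq : forall n : Z, (n * n)%Z <> d)
  (z0 z1 zinf : cusp)
  (h0 : is_cusp z0) (h1 : is_cusp z1) (hinf : is_cusp zinf)
  (h01 : cusp_distinct d z0 z1) (h0inf : cusp_distinct d z0 zinf)
  (h1inf : cusp_distinct d z1 zinf)
  (g : mat2) (hg : ~ Keq (Kdet d g) Kzero)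
  (hg0 : cusp_eq d (cusp_act d g z0) cusp0)
  (hg1 : cusp_eq d (cusp_act d g z1) cusp1)
  (hginf : cusp_eq d (cusp_act d g zinf) cuspinf) :
  (on_holo_curve (pull_diag d g tri01inf) \/
   on_antiholo_curve (pull_diag d g tri01inf)) /\
  (forall side : C -> Prop,
     side = side_0inf \/ side = side_1inf \/ side = side_01 ->
     on_holo_curve (pull_diag d g side) /\
     on_antiholo_curve (pull_diag d g side)).
Proof.
clear hd hsq h0 h1 hinf h01 h0inf h1inf hg hg0 hg1 hginf.
set (a1 := emb1 d (ma g)). set (b1 := emb1 d (mb g)).
set (c1 := emb1 d (mc g)). set (e1 := emb1 d (md g)).
set (a2 := emb2 d (ma g)). set (b2 := emb2 d (mb g)).
set (c2 := emb2 d (mc g)). set (e2 := emb2 d (md g)).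
set (s1 := if Rlt_dec 0 (a1*e1 - b1*c1) then true else false).
set (s2 := if Rlt_dec 0 (a2*e2 - b2*c2) then true else false).
assert (A1 : forall z, act1 d g z = mob a1 b1 c1 e1 (sel s1 z)) by (intro z; apply real_act_sel).
assert (A2 : forall z, act2 d g z = mob a2 b2 c2 e2 (sel s2 z)) by (intro z; apply real_act_sel).
assert (Gen : forall S : C -> Prop, (forall x, S x -> Hpl x) -> forall y1 y2,
   pull_diag d g S y1 y2 -> Hpl y1 /\ Hpl y2 /\ S (act1 d g y1) /\
   Rel a1 b1 c1 e1 s1 a2 b2 c2 e2 s2 y1 y2).
{ intros S HS y1 y2 (H1 & H2 & E & HSx). repeat split; try assumption.
  exists (act1 d g y1). split; [apply HS; exact HSx|]. split; [apply A1|]. rewrite E; apply A2. }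
destruct (Req_dec (a1*e1 - b1*c1) 0) as [Z1|D1].
{ assert (Emp : forall S : C -> Prop, (forall x, S x -> Hpl x) -> forall y1 y2, ~ pull_diag d g S y1 y2).
  { intros S HS y1 y2 P. destruct (Gen S HS y1 y2 P) as (_ & _ & HSx & _).
    apply HS in HSx. rewrite A1 in HSx. exact (mob_det0 _ _ _ _ _ Z1 HSx). }
  split. left. apply (empty_both _ (Emp _ (fun x h => proj1 h))).
  intros side Hs. apply empty_both. apply Emp.
  destruct Hs as [ -> | [ -> | -> ] ]; intros x h; apply h. }
destruct (Req_dec (a2*e2 - b2*c2) 0) as [Z2|D2].
{ assert (Emp : forall S : C -> Prop, (forall x, S x -> Hpl x) -> forall y1 y2, ~ pull_diag d g S y1 y2).
  { intros S HS y1 y2 P. destruct P as (H1 & H2 & E & HSx).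
    apply HS in HSx. rewrite E, A2 in HSx. exact (mob_det0 _ _ _ _ _ Z2 HSx). }
  split. left. apply (empty_both _ (Emp _ (fun x h => proj1 h))).
  intros side Hs. apply empty_both. apply Emp.
  destruct Hs as [ -> | [ -> | -> ] ]; intros x h; apply h. }
split.
- destruct (master _ _ _ _ s1 _ _ _ _ s2 (pull_diag d g tri01inf) D1 D2) as [M1 M2].
  { intros y1 y2 P. destruct (Gen _ (fun x h => proj1 h) y1 y2 P) as (? & ? & _ & ?). auto. }
  destruct (Bool.bool_dec s1 s2); [left; apply M1 | right; apply M2]; assumption.
- assert (Rf : forall a3 b3 c3 e3 (S : C -> Prop), (forall x, S x -> Hpl x) ->
     (a3*e3 - b3*c3 <> 0)%R ->
     (forall w x, Hpl x -> S x -> x = mob a2 b2 c2 e2 w -> x = mob a3 b3 c3 e3 (Cconj w)) ->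
     on_holo_curve (pull_diag d g S) /\ on_antiholo_curve (pull_diag d g S)).
  { intros a3 b3 c3 e3 S HS D3 HR.
    apply (side_both a1 b1 c1 e1 s1 a2 b2 c2 e2 s2 a3 b3 c3 e3 _ D1 D2 D3).
    - intros y1 y2 P. destruct (Gen _ HS y1 y2 P) as (? & ? & _ & ?). auto.
    - intros y1 y2 P. destruct (Gen _ HS y1 y2 P) as (? & ? & HSx & x & Hx & E1 & E2).
      repeat split; try assumption. exists x. repeat split; try assumption.
      rewrite <- conj_sel. apply HR; try assumption. rewrite E1. rewrite <- A1. exact HSx. }
  intros side Hs. destruct Hs as [ -> | [ -> | -> ] ].
  + apply (Rf (-a2)%R (-b2)%R c2 e2). intros x h; apply h.
    { intro K; apply D2; lra. }
    intros w x Hx Sx E. apply refl0; try assumption. apply Sx.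
  + apply (Rf (2*c2 - a2)%R (2*e2 - b2)%R c2 e2). intros x h; apply h.
    { intro K; apply D2; lra. }
    intros w x Hx Sx E. apply refl1; try assumption. apply Sx.
  + apply (Rf a2 b2 (2*a2 - c2)%R (2*b2 - e2)%R). intros x h; apply h.
    { intro K; apply D2; lra. }
    intros w x Hx Sx E. apply refl01; try assumption. apply Sx.
Qed.
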